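(* For every integer $n\ge 1$, $\mathrm{Int}_c(6n+1)=\{0,1,2,\ldots,n\}$.
   Context: For a positive integer $v$, a cyclic Steiner triple system CSTS$(v)$ is a set $\mathcal B$ of 3-element subsets (blocks) of $\mathbb Z_v$ such that every 2-element subset of $\mathbb Z_v$ lies in exactly one block, and $\mathcal B$ is invariant under the translation $x\mapsto x+1$. The blocks of such a system split into orbits under translation; a base block is a representative of an orbit. Two CSTS$(v)$ have $k$ base blocks in common if exactly $k$ translation orbits of blocks are shared by the two systems. $\mathrm{Int}_c(v)$ denotes the set of integers $k$ such that there exist two CSTS$(v)$ with exactly $k$ base blocks in common. *)

(* Defs.v *)
From mathcomp Require Import all_boot.
Set Implicit Arguments. Unset Strict Implicit. Unset Printing Implicit Defensive.

(* Points of Z_v are represented by 'I_v; translation x |-> x+1 (mod v) is ordS. *)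
Definition translate (v : nat) (b : {set 'I_v}) : {set 'I_v} := [set ordS x | x in b].

Definition is_CSTS (v : nat) (B : {set {set 'I_v}}) : Prop :=
  [/\ (forall b, b \in B -> #|b| = 3),
      (forall x y : 'I_v, x != y -> #|[set b in B | (x \in b) && (y \in b)]| = 1)
    & (forall b, b \in B -> translate b \in B)].

Definition block_orbit (v : nat) (b : {set 'I_v}) : {set {set 'I_v}} :=
  [set iter k (@translate v) b | k : 'I_v].

Definition common_base_blocks (v : nat) (B1 B2 : {set {set 'I_v}}) : nat :=
  #|[set block_orbit b | b in B1 :&: B2]|.

Definition Int_c (v : nat) (k : nat) : Prop :=
  exists B1 B2 : {set {set 'I_v}},
    [/\ is_CSTS B1, is_CSTS B2 & common_base_blocks B1 B2 = k].

(* Main.v *)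
Require Import Defs.
From mathcomp Require Import all_boot all_algebra zify ring.
Set Implicit Arguments. Unset Strict Implicit. Unset Printing Implicit Defensive.
Import GRing.Theory.

Local Open Scope ring_scope.

Definition tr (m : nat) (t : 'I_m.+2) (b : {set 'I_m.+2}) : {set 'I_m.+2} :=
  [set x + t | x in b].

Lemma ordS_add1 m (x : 'I_m.+2) : ordS x = x + 1.
Proof. exact: (esym (add_Zp_1 (p := m.+2) x)). Qed.

Lemma translate_tr m (b : {set 'I_m.+2}) : translate b = tr 1 b.
Proof. by apply: eq_imset => x; rewrite ordS_add1. Qed.

Lemma tr_comp m (s t : 'I_m.+2) b : tr s (tr t b) = tr (t + s) b.
Proof. by rewrite /tr -imset_comp; apply: eq_imset => x /=; rewrite addrA. Qed.

Lemma tr0 m (b : {set 'I_m.+2}) : tr 0 b = b.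
Proof.
by rewrite /tr (eq_imset _ (fun x => addr0 x)) imset_id.
Qed.

Lemma iter_translate m k (b : {set 'I_m.+2}) : iter k (@translate _) b = tr (k%:R) b.
Proof.
elim: k => [|k IH] /=; first by rewrite tr0.
by rewrite IH translate_tr tr_comp mulrSr.
Qed.

Lemma block_orbitE m (b : {set 'I_m.+2}) : block_orbit b = [set tr t b | t : 'I_m.+2].
Proof.
by apply: eq_imset => k; rewrite iter_translate natr_Zp.
Qed.

Lemma card_tr m (t : 'I_m.+2) b : #|tr t b| = #|b|.
Proof. by rewrite card_imset //; apply: addIr. Qed.

Lemma mem_tr m (t x : 'I_m.+2) b : (x \in tr t b) = (x - t \in b).
Proof.
apply/imsetP/idP => [[y yb ->]|h]; first by rewrite addrK.
by exists (x - t) => //; rewrite subrK.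
Qed.

Lemma csts_tr m (B : {set {set 'I_m.+2}}) b t :
  is_CSTS B -> b \in B -> tr t b \in B.
Proof.
case=> _ _ HT bB; rewrite -(natr_Zp t).
elim: (nat_of_ord t) => [|k IH]; first by rewrite tr0.
by rewrite mulrSr -tr_comp -translate_tr HT.
Qed.

Lemma csts_uniq m (B : {set {set 'I_m.+2}}) b1 b2 x y :
  is_CSTS B -> b1 \in B -> b2 \in B -> x != y ->
  x \in b1 -> y \in b1 -> x \in b2 -> y \in b2 -> b1 = b2.
Proof.
case=> _ HP _ b1B b2B xy x1 y1 x2 y2.
have /eqP/cards1P[c Hc] := HP x y xy.
have : b1 \in [set c] by rewrite -Hc inE b1B x1 y1.
have : b2 \in [set c] by rewrite -Hc inE b2B x2 y2.
by rewrite !inE => /eqP -> /eqP ->.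
Qed.

Lemma tr_fix m (b : {set 'I_m.+2}) d :
  coprime m.+2 3 -> #|b| = 3%N -> tr d b = b -> d = 0.
Proof.
move=> cop cb H.
have S : \sum_(x in tr d b) x = \sum_(x in b) x by rewrite H.
rewrite big_imset /= in S; last by move=> x y _ _; apply: addIr.
rewrite big_split /= sumr_const cb in S.
have {S} : d *+ 3 = 0.
  by apply: (@addrI _ (\sum_(i in b) i)); rewrite addr0.
rewrite Zp_mulrn => /(congr1 val) /=.
move/eqP; rewrite -/(dvdn _ _) Gauss_dvdl // => dv.
apply/val_inj => /=; have := ltn_ord d.
by move: dv => /dvdnP [q ->]; case: q => [|q] //=; rewrite mulSn; lia.
Qed.

Local Close Scope ring_scope.
Local Open Scope ring_scope.

Definition PB m (b : {set 'I_m.+2}) := setX b b :\: [set (z, z) | z in b].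
Definition Dl m (b : {set 'I_m.+2}) := [set p.2 - p.1 | p in PB b].

Lemma mem_PB m (b : {set 'I_m.+2}) x y :
  ((x, y) \in PB b) = [&& x \in b, y \in b & x != y].
Proof.
rewrite !inE /=; case: (x =P y) => [<-|ne] /=.
  case xb: (x \in b); last by rewrite !andbF.
  by rewrite (imset_f (fun z => (z, z)) xb).
have -> : (x, y) \notin [set (z, z) | z in b].
  by apply/imsetP => -[z _ [e1 e2]]; apply: ne; rewrite e1 e2.
by rewrite andbT.
Qed.

Lemma DlP m (b : {set 'I_m.+2}) z :
  reflect (exists x y, [/\ x \in b, y \in b, x != y & z = y - x]) (z \in Dl b).
Proof.
apply: (iffP imsetP) => [[[x y]]|[x [y [xb yb xy ->]]]].
  by rewrite mem_PB => /and3P [xb yb xy] ->; exists x, y.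
by exists (x, y); rewrite // mem_PB xb yb xy.
Qed.

Lemma Dl_tr m t (b : {set 'I_m.+2}) : Dl (tr t b) = Dl b.
Proof.
apply/setP => z; apply/DlP/DlP => [[x [y [xb yb xy ->]]]|[x [y [xb yb xy ->]]]].
  rewrite !mem_tr in xb yb; exists (x - t), (y - t); split => //.
    by apply: contra xy => /eqP e; apply/eqP; apply: (addIr (- t)).
  by rewrite opprB addrA subrK.
exists (x + t), (y + t); rewrite !mem_tr !(addrK t); split => //.
  by apply: contra xy => /eqP e; apply/eqP; apply: (addIr t).
by rewrite opprD addrACA subrr addr0.
Qed.

Lemma Dl0 m (b : {set 'I_m.+2}) : 0 \notin Dl b.
Proof. by apply/DlP => -[x [y [_ _ xy]]] /eqP; rewrite eq_sym subr_eq0 eq_sym (negbTE xy). Qed.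

Lemma Dl_card m (B : {set {set 'I_m.+2}}) b :
  coprime m.+2 3 -> is_CSTS B -> b \in B -> #|Dl b| = 6%N.
Proof.
move=> cop HB bB; have [H3 _ _] := HB; have cb := H3 b bB.
rewrite card_in_imset.
  rewrite cardsD cardsX cb.
  have -> : setX b b :&: [set (z, z) | z in b] = [set (z, z) | z in b].
    apply/setIidPr/subsetP => p /imsetP [z zb ->]; by rewrite inE /= zb.
  by rewrite card_imset ?cb // => x y [].
move=> [x1 y1] [x2 y2]; rewrite !mem_PB /= => /and3P [x1b y1b xy1] /and3P [x2b y2b xy2] E.
case: (y1 =P y2) => [ey|ney].
  by move: E; rewrite ey => /addrI /oppr_inj ->.
exfalso; set d := y1 - x1.
have T : tr d b = b.
  apply: (csts_uniq (x := y1) (y := y2) HB) => //; first exact: csts_tr.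
    by apply/eqP.
    by rewrite mem_tr /d subKr.
  by rewrite mem_tr /d E subKr.
have := tr_fix cop cb T; move/eqP; rewrite /d subr_eq0 => /eqP e.
by rewrite e eqxx in xy1.
Qed.

Lemma Dl_meet m (B : {set {set 'I_m.+2}}) b1 b2 z :
  is_CSTS B -> b1 \in B -> b2 \in B -> z \in Dl b1 -> z \in Dl b2 ->
  exists t, b2 = tr t b1.
Proof.
move=> HB b1B b2B /DlP [x1 [y1 [x1b y1b xy1 ->]]] /DlP [x2 [y2 [x2b y2b xy2 E]]].
exists (x2 - x1); symmetry.
apply: (csts_uniq (x := x2) (y := y2) HB) => //; first exact: csts_tr.
  by rewrite mem_tr subKr.
by rewrite mem_tr opprB addrA addrAC -E subrK.
Qed.

Lemma common_le m n (B1 B2 : {set {set 'I_m.+2}}) :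
  m.+1 = (6 * n)%N -> is_CSTS B1 -> is_CSTS B2 ->
  (common_base_blocks B1 B2 <= n)%N.
Proof.
move=> Hm H1 H2.
have cop : coprime m.+2 3.
  have -> : m.+2 = ((2 * n) * 3 + 1)%N by lia.
  by rewrite coprime_sym /coprime gcdnMDl.
set X := B1 :&: B2.
pose h (d : {set 'I_m.+2}) := [set b' in B1 | Dl b' == d].
have E : [set block_orbit b | b in X] = [set h d | d in [set Dl b | b in X]].
  rewrite -imset_comp; apply: eq_in_imset => b; rewrite inE => /andP [bB _] /=.
  rewrite block_orbitE; apply/setP => b'; rewrite inE.
  apply/imsetP/andP => [[t _ ->]|[b'B /eqP Eb]].
    by rewrite csts_tr // Dl_tr.
  have : (0 < #|Dl b|)%N by rewrite (Dl_card cop H1 bB).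
  case/card_gt0P => z zD.
  have zD2 : z \in Dl b' by rewrite Eb.
  have [t ->] := Dl_meet H1 bB b'B zD zD2.
  by exists t.
rewrite /common_base_blocks -/X E.
apply: leq_trans (leq_imset_card _ _) _.
set F := [set Dl b | b in X].
have tF : trivIset F.
  apply/trivIsetP => A1 A2 /imsetP [b1 b1X ->] /imsetP [b2 b2X ->] ne.
  rewrite -setI_eq0; apply/eqP/setP => z; rewrite !inE.
  apply/negP => /andP [z1 z2].
  move: b1X b2X; rewrite !inE => /andP [b1B _] /andP [b2B _].
  have [t Et] := Dl_meet H1 b1B b2B z1 z2.
  by move: ne; rewrite Et Dl_tr eqxx.
have S : (\sum_(A in F) #|A| = #|F| * 6)%N.
  rewrite -sum_nat_const; apply: eq_bigr => A /imsetP [b bX ->].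
  by move: bX; rewrite inE => /andP [bB _]; rewrite (Dl_card cop H1 bB).
have C : (#|cover F| <= 6 * n)%N.
  have C0 : #|[set~ (0 : 'I_m.+2)]| = (6 * n)%N by rewrite cardsC1 card_ord Hm.
  rewrite -C0.
  apply: subset_leq_card; apply/bigcupsP => A /imsetP [b _ ->].
  apply/subsetP => z zD; rewrite !inE.
  by apply: contraTneq zD => ->; rewrite (negbTE (Dl0 b)).
move: C; rewrite -(eqP tF) S mulnC leq_pmul2l //.
Qed.

Local Close Scope ring_scope.
Local Open Scope ring_scope.

Definition sysS m n (S : 'I_n -> {set 'I_m.+2}) : {set {set 'I_m.+2}} :=
  [set tr t (S j) | j : 'I_n, t : 'I_m.+2].

Definition G1 m n (S : 'I_n -> {set 'I_m.+2}) := forall j, #|S j| = 3%N.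
Definition G2 m n (S : 'I_n -> {set 'I_m.+2}) :=
  forall z, z != 0 -> exists j a b, [/\ a \in S j, b \in S j & b - a = z].
Definition G3 m n (S : 'I_n -> {set 'I_m.+2}) :=
  forall j j' a b a' b', a \in S j -> b \in S j -> a' \in S j' -> b' \in S j' ->
    a != b -> b - a = b' - a' -> j = j' /\ a = a'.

Lemma sys_CSTS m n (S : 'I_n -> {set 'I_m.+2}) :
  G1 S -> G2 S -> G3 S -> is_CSTS (sysS S).
Proof.
move=> g1 g2 g3; split.
- by move=> b /imset2P [j t _ _ ->]; rewrite card_tr.
- move=> x y xy.
  have nz : y - x != 0 by rewrite subr_eq0 eq_sym.
  have [j [a [b [aS bS E]]]] := g2 _ nz.
  apply/eqP/cards1P; exists (tr (x - a) (S j)); apply/setP => c; rewrite !inE.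
  apply/idP/eqP.
  + case/andP => /imset2P [j' t _ _ ->]; rewrite !mem_tr => /andP [xc yc].
    have ab : a != b by apply: contraNneq nz => e; rewrite -E e subrr.
    have E2 : b - a = (y - t) - (x - t) by rewrite E opprB addrA subrK.
    have [ej ea] := g3 _ _ _ _ _ _ aS bS xc yc ab E2.
    by rewrite ej ea subKr.
  + move=> ->; rewrite (imset2_f (fun j t => tr t (S j))) //=.
    rewrite !mem_tr subKr aS /=.
    by rewrite opprB addrA addrAC -E subrK.
- move=> b /imset2P [j t _ _ ->].
  by rewrite translate_tr tr_comp (imset2_f (fun j t => tr t (S j))).
Qed.

Lemma orbit_sys m n (S : 'I_n -> {set 'I_m.+2}) j t :
  block_orbit (tr t (S j)) = [set tr u (S j) | u : 'I_m.+2].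
Proof.
rewrite block_orbitE; apply/setP => c; apply/imsetP/imsetP => [[s _ ->]|[u _ ->]].
  by exists (t + s); rewrite // tr_comp.
by exists (u - t) => //; rewrite tr_comp addrC subrK.
Qed.

Lemma three m (A : {set 'I_m.+2}) : #|A| = 3%N ->
  exists a b c, [/\ a \in A, b \in A, c \in A & [/\ a != b, a != c & b != c]].
Proof.
move=> cA.
have : (0 < #|A|)%N by rewrite cA.
case/card_gt0P => a aA.
have h1 := cardsD1 a A; rewrite aA cA in h1.
have : (0 < #|A :\ a|)%N by lia.
case/card_gt0P => b; rewrite !inE => /andP [ba bA].
have : (0 < #|A :\ a :\ b|)%N.
  have h2 := cardsD1 b (A :\ a).
  rewrite !inE ba bA in h2; lia.
case/card_gt0P => c; rewrite !inE => /and3P [cb ca cA'].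
by exists a, b, c; rewrite aA bA cA' eq_sym ba eq_sym ca eq_sym cb.
Qed.

Definition neg m (b : {set 'I_m.+2}) := [set - x | x in b].

Lemma mem_neg m (b : {set 'I_m.+2}) x : (x \in neg b) = (- x \in b).
Proof.
apply/imsetP/idP => [[y yb ->]|h]; first by rewrite opprK.
by exists (- x); rewrite ?opprK.
Qed.

Definition mir m n (S : 'I_n -> {set 'I_m.+2}) (k : nat) (j : 'I_n) :=
  if (j < k)%N then S j else neg (S j).

Lemma mir_G m n (S : 'I_n -> {set 'I_m.+2}) k :
  G1 S -> G2 S -> G3 S -> [/\ G1 (mir S k), G2 (mir S k) & G3 (mir S k)].
Proof.
move=> g1 g2 g3; split.
- move=> j; rewrite /mir; case: ifP => _ //.
  by rewrite card_imset //; apply: oppr_inj.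
- move=> z nz; have [j [a [b [aS bS E]]]] := g2 z nz.
  exists j; rewrite /mir; case: ifP => _; first by exists a, b.
  exists (- b), (- a); rewrite !mem_neg !opprK; split => //.
  by rewrite addrC.
- move=> j j' a b a' b'; rewrite /mir.
  case: ifP => jk; case: ifP => j'k; rewrite ?mem_neg => aS bS a'S b'S ab E.
  + exact: g3 aS bS a'S b'S ab E.
  + have E2 : b - a = - a' - - b' by rewrite E opprK addrC.
    have [ej _] := g3 _ _ _ _ _ _ aS bS b'S a'S ab E2.
    by rewrite ej j'k in jk.
  + have ab' : - b != - a by apply: contra ab => /eqP /oppr_inj ->.
    have E2 : - a - - b = b' - a' by rewrite -E opprK addrC.
    have [ej _] := g3 _ _ _ _ _ _ bS aS a'S b'S ab' E2.
    by rewrite ej j'k in jk.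
  + have ab' : - b != - a by apply: contra ab => /eqP /oppr_inj ->.
    have E2 : - a - - b = - a' - - b' by rewrite opprK addrC E opprK addrC.
    have [ej eb] := g3 _ _ _ _ _ _ bS aS b'S a'S ab' E2.
    by split => //; have e := oppr_inj eb; move: E; rewrite e => /addrI /oppr_inj ->.
Qed.

Lemma refl_contra m n (S : 'I_n -> {set 'I_m.+2}) k (j j' : 'I_n) (t t' : 'I_m.+2) :
  G1 S -> G3 S -> (k <= j)%N -> tr t (S j) = tr t' (mir S k j') -> False.
Proof.
move=> g1 g3 kj E.
have key : forall a b, a \in S j -> b \in S j -> a != b -> t' = t + a + b.
  move=> a b aS bS ab.
  have ha : a + t - t' \in mir S k j' by rewrite -mem_tr -E mem_tr addrK.
  have hb : b + t - t' \in mir S k j' by rewrite -mem_tr -E mem_tr addrK.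
  have D : b - a = (b + t - t') - (a + t - t').
    by rewrite opprB addrA subrK opprD addrACA subrr addr0.
  move: ha hb D; rewrite /mir; case: ifP => j'k ha hb D.
    have [ej _] := g3 _ _ _ _ _ _ aS bS ha hb ab D.
    by move: j'k; rewrite -ej ltnNge kj.
  rewrite !mem_neg in ha hb.
  have D2 : b - a = - (a + t - t') - - (b + t - t') by rewrite D opprK addrC.
  have [_ eb] := g3 _ _ _ _ _ _ aS bS hb ha ab D2.
  rewrite eb; ring.
have [a [b [c [aS bS cS [ab ac bc]]]]] := three (g1 j).
have := key _ _ aS bS ab; rewrite (key _ _ aS cS ac) => /addrI ebc.
by rewrite ebc eqxx in bc.
Qed.

Lemma card_lt n k : (k <= n)%N -> #|[set j : 'I_n | (j < k)%N]| = k.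
Proof.
move=> kn; rewrite -[RHS](card_ord k).
have -> : [set j : 'I_n | (j < k)%N] = [set widen_ord kn i | i : 'I_k].
  apply/setP => j; rewrite inE; apply/idP/imsetP => [jk|[i _ ->]] /=.
    by exists (Ordinal jk) => //; apply/val_inj.
  exact: ltn_ord.
by rewrite card_imset // => x y /(congr1 val) /= e; apply/val_inj.
Qed.

Lemma common_count m n (S : 'I_n -> {set 'I_m.+2}) k :
  G1 S -> G3 S -> (k <= n)%N ->
  common_base_blocks (sysS S) (sysS (mir S k)) = k.
Proof.
move=> g1 g3 kn.
pose O j := [set tr u (S j) | u : 'I_m.+2].
have E : [set block_orbit b | b in sysS S :&: sysS (mir S k)] =
         [set O j | j in [set j : 'I_n | (j < k)%N]].
  apply/setP => X; apply/imsetP/imsetP.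
  - case=> b; rewrite inE => /andP [/imset2P [j t _ _ ->] /imset2P [j' t' _ _ E]] ->.
    case: (ltnP j k) => jk; first by exists j; rewrite ?inE // orbit_sys.
    by case: (refl_contra g1 g3 jk E).
  - case=> j; rewrite inE => jk ->; exists (S j).
      rewrite inE -{1 2}(tr0 (S j)).
      rewrite (imset2_f (fun j t => tr t (S j))) //=.
      have -> : S j = mir S k j by rewrite /mir jk.
      by rewrite (imset2_f (fun j t => tr t (mir S k j))).
    by rewrite -{1}(tr0 (S j)) orbit_sys.
rewrite /common_base_blocks E card_in_imset ?card_lt //.
move=> j1 j2 _ _ e.
have : S j1 \in O j2 by rewrite -e; apply/imsetP; exists 0; rewrite ?tr0.
case/imsetP => u _ eu.
have [a [b [c [aS bS cS [ab _ _]]]]] := three (g1 j1).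
move: aS bS; rewrite eu !mem_tr => aS' bS'.
have aS : a \in S j1 by rewrite eu mem_tr.
have bS : b \in S j1 by rewrite eu mem_tr.
have D : b - a = (b - u) - (a - u) by rewrite opprB addrA subrK.
by case: (g3 _ _ _ _ _ _ aS bS aS' bS' ab D).
Qed.

Local Close Scope ring_scope.
Local Open Scope ring_scope.

Definition fd m n (z : 'I_m.+2) : nat := if (z <= 3 * n)%N then nat_of_ord z else (m.+2 - z)%N.

Lemma valN m (z : 'I_m.+2) : nat_of_ord (- z) = ((m.+2 - z) %% m.+2)%N.
Proof. by []. Qed.

Lemma valD m (x y : 'I_m.+2) : nat_of_ord (x + y) = ((x + y) %% m.+2)%N.
Proof. by []. Qed.

Lemma valn m e : nat_of_ord (e%:R : 'I_m.+2) = (e %% m.+2)%N.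
Proof. by rewrite Zp_nat. Qed.

Lemma modsm a v : (0 < v)%N -> (a < 2 * v)%N -> (a %% v = if (a < v)%N then a else a - v)%N.
Proof.
move=> v0 a2; case: ltnP => av; first by rewrite modn_small.
rewrite -[in LHS](subnK av) modnDr modn_small //; lia.
Qed.

Lemma fd_opp m n (z : 'I_m.+2) : m.+1 = (6 * n)%N -> fd n (- z) = fd n z.
Proof.
move=> Hm; rewrite /fd valN; have := ltn_ord z.
case: (posnP (nat_of_ord z)) => [->|z0] zl.
  by rewrite subn0 modnn.
rewrite modn_small; last lia.
case: ifP; case: ifP; lia.
Qed.

Lemma fd_range m n (z : 'I_m.+2) : m.+1 = (6 * n)%N -> z != 0 ->
  (0 < fd n z <= 3 * n)%N.
Proof.
move=> Hm nz; have := ltn_ord z.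
have : nat_of_ord z != 0%N by apply: contra nz => /eqP e; apply/eqP/val_inj.
rewrite /fd; case: ifP; lia.
Qed.

Lemma fd_nat m n e : m.+1 = (6 * n)%N -> (0 < e <= 3 * n)%N -> fd n (e%:R : 'I_m.+2) = e.
Proof.
move=> Hm he; rewrite /fd valn modn_small; last lia.
by rewrite ifT //; lia.
Qed.

Lemma fd_inj m n (x y : 'I_m.+2) : m.+1 = (6 * n)%N -> fd n x = fd n y -> x = y \/ x = - y.
Proof.
move=> Hm; rewrite /fd => E.
have xl := ltn_ord x; have yl := ltn_ord y.
case: (posnP (nat_of_ord y)) => y0.
  left; apply/val_inj => /=; move: E; rewrite y0 leq0n; case: ifP; lia.
move: E; case: ifP => hx; case: ifP => hy E.
- by left; apply/val_inj.
- by right; apply/val_inj => /=; rewrite modn_small; lia.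
- by right; apply/val_inj => /=; rewrite modn_small; lia.
- by left; apply/val_inj => /=; lia.
Qed.

Lemma fd0 m n : fd n (0 : 'I_m.+2) = 0%N.
Proof. by []. Qed.

Lemma twice0 m n (x : 'I_m.+2) : m.+1 = (6 * n)%N -> x = - x -> x = 0.
Proof.
move=> Hm /(congr1 (@nat_of_ord _)); rewrite valN => E; apply/val_inj => /=.
have := ltn_ord x; case: (posnP (nat_of_ord x)) => // x0 xl.
move: E; rewrite modn_small; lia.
Qed.

Lemma natv m : ((m.+2)%:R : 'I_m.+2) = 0.
Proof. by apply/val_inj; rewrite Zp_nat /= modnn. Qed.

Lemma card3 m (a b c : 'I_m.+2) : a != b -> a != c -> b != c -> #|a |: (b |: [set c])| = 3%N.
Proof.
move=> ab ac bc; rewrite !cardsU1 cards1 !inE.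
by rewrite (negbTE ab) (negbTE ac) (negbTE bc).
Qed.

Local Close Scope ring_scope.
Local Open Scope ring_scope.

Definition trip := (nat * nat * nat)%type.
Definition tp (x : trip) : nat := x.1.1.
Definition tq (x : trip) : nat := x.1.2.
Definition tc (x : trip) : nat := x.2.
Definition elems (D : seq trip) : seq nat :=
  [seq tp x | x <- D] ++ [seq tq x | x <- D] ++ [seq tc x | x <- D].
Definition hok n (D : seq trip) : bool :=
  [&& size D == n,
      all (fun x => (tc x == tp x + tq x)%N || (tc x + tp x + tq x == 6 * n + 1)%N) D,
      all (fun e => (0 < e <= 3 * n)%N) (elems D)
    & uniq (elems D)].

Definition x0 : trip := (0, 0, 0)%N.

Definition SD m n (D : seq trip) (j : 'I_n) : {set 'I_m.+2} :=
  let x := nth x0 D j in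
  0 |: ((tp x)%:R |: [set (tp x)%:R + (tq x)%:R]).

Definition ev n (D : seq trip) (s j : nat) : nat := nth 0%N (elems D) (s * n + j).

Lemma ev_val n D j : size D = n -> (j < n)%N ->
  [/\ ev n D 0 j = tp (nth x0 D j), ev n D 1 j = tq (nth x0 D j)
    & ev n D 2 j = tc (nth x0 D j)].
Proof.
move=> sD jn; rewrite /ev /elems.
split.
- by rewrite mul0n add0n nth_cat size_map sD jn (nth_map x0) // sD.
- rewrite mul1n nth_cat size_map sD ltnNge leq_addr /= addKn.
  by rewrite nth_cat size_map sD jn (nth_map x0) // sD.
- rewrite nth_cat size_map sD ltnNge (_ : n <= 2 * n + j)%N /=; last lia.
  rewrite nth_cat size_map sD ltnNge (_ : n <= 2 * n + j - n)%N /=; last lia.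
  by rewrite (_ : 2 * n + j - n - n = j)%N ?(nth_map x0) ?sD //; lia.
Qed.

Lemma ev_inj n D s s' j j' : size D = n -> uniq (elems D) ->
  (s < 3)%N -> (s' < 3)%N -> (j < n)%N -> (j' < n)%N ->
  ev n D s j = ev n D s' j' -> s = s' /\ j = j'.
Proof.
move=> sD uD s3 s'3 jn j'n E.
have sz : size (elems D) = (3 * n)%N by rewrite /elems !size_cat !size_map sD; lia.
have i1 : (s * n + j < 3 * n)%N by case: s s3 {E} => [|[|[|]]] //= _; lia.
have i2 : (s' * n + j' < 3 * n)%N by case: s' s'3 {E} => [|[|[|]]] //= _; lia.
move: (@nth_uniq _ 0%N (elems D) (s * n + j)%N (s' * n + j')%N); rewrite sz => /(_ i1 i2 uD).
rewrite /ev in E; rewrite E eqxx => /esym/eqP e.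
case: s s3 {E i1} e => [|[|[|]]] //; case: s' s'3 {i2} => [|[|[|]]] // _ _ e; split; lia.
Qed.

Definition Pj m (D : seq trip) (j : nat) : 'I_m.+2 := (tp (nth x0 D j))%:R.
Definition Qj m (D : seq trip) (j : nat) : 'I_m.+2 := (tq (nth x0 D j))%:R.
Definition Xs m D (s j : nat) : 'I_m.+2 :=
  match s with 0 => Pj m D j | 1 => Qj m D j | _ => Pj m D j + Qj m D j end.
Definition Aa m D (s : nat) (sg : bool) (j : nat) : 'I_m.+2 :=
  match s, sg with
  | 0, true => 0 | 0, false => Pj m D j | 1, true => Pj m D j
  | 1, false => Pj m D j + Qj m D j | _, true => 0 | _, false => Pj m D j + Qj m D j end.

Lemma SDE m n D (j : 'I_n) : SD m D j = 0 |: (Pj m D j |: [set Pj m D j + Qj m D j]).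
Proof. by []. Qed.

Lemma evr n D s j : hok n D -> (s < 3)%N -> (j < n)%N -> (0 < ev n D s j <= 3 * n)%N.
Proof.
case/and4P => /eqP sD _ /allP rng _ s3 jn; apply: rng; apply: mem_nth.
rewrite /elems !size_cat !size_map sD.
by case: s s3 => [|[|[|]]] //= _; lia.
Qed.

Lemma fdX m n D s j : m.+1 = (6 * n)%N -> hok n D -> (s < 3)%N -> (j < n)%N ->
  fd n (Xs m D s j) = ev n D s j.
Proof.
move=> Hm H s3 jn; have [sD rel _ _] := and4P H; move/eqP: sD => sD.
have [e0 e1 e2] := ev_val sD jn.
have r0 := evr (s := 0%N) H isT jn; have r1 := evr (s := 1%N) H isT jn; have r2 := evr (s := 2%N) H isT jn.
case: s s3 => [|[|[|]]] // _ /=.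
- by rewrite /Pj -e0 fd_nat // e0 -e0.
- by rewrite /Qj -e1 fd_nat // e1 -e1.
- rewrite /Pj /Qj -natrD.
  have /allP := rel => /(_ (nth x0 D j)); rewrite mem_nth ?sD // => /(_ isT).
  case/orP => /eqP rl.
    by rewrite -rl -e2 fd_nat.
  have -> : ((tp (nth x0 D j) + tq (nth x0 D j))%:R : 'I_m.+2) = - (tc (nth x0 D j))%:R.
    apply/eqP; rewrite -subr_eq0 opprK -natrD.
    by rewrite (_ : (_ + _ + _)%N = m.+2) ?natv //; lia.
  by rewrite fd_opp // -e2 fd_nat.
Qed.

Lemma pairs m n D (j : 'I_n) a b : a \in SD m D j -> b \in SD m D j -> a != b ->
  exists s sg, [/\ (s < 3)%N, b - a = (if sg then Xs m D s j else - Xs m D s j)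
                 & a = Aa m D s sg j].
Proof.
rewrite SDE; set P := Pj m D j; set Q := Qj m D j.
case/setU1P => [->|/setU1P [->|/set1P ->]];
case/setU1P => [->|/setU1P [->|/set1P ->]]; rewrite ?eqxx // => _.
- by exists 0%N, true; split => //=; rewrite subr0.
- by exists 2%N, true; split => //=; rewrite subr0.
- by exists 0%N, false; split => //=; rewrite sub0r.
- by exists 1%N, true; split => //=; rewrite /P /Q; ring.
- by exists 2%N, false; split => //=; rewrite sub0r.
- by exists 1%N, false; split => //=; rewrite /P /Q; ring.
Qed.

Lemma hok_G m n D : m.+1 = (6 * n)%N -> hok n D ->
  [/\ G1 (@SD m n D), G2 (@SD m n D) & G3 (@SD m n D)].
Proof.
move=> Hm H; have [sD rel rng uD] := and4P H; move/eqP: sD => sD.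
have fX : forall s (j : 'I_n), (s < 3)%N -> fd n (Xs m D s j) = ev n D s j.
  by move=> s j s3; apply: fdX.
have rX : forall s (j : 'I_n), (s < 3)%N -> (0 < ev n D s j <= 3 * n)%N.
  by move=> s j s3; apply: evr.
have nzX : forall s (j : 'I_n), (s < 3)%N -> Xs m D s j != 0.
  move=> s j s3; apply/eqP => e; have := fX s j s3; rewrite e fd0.
  by have := rX s j s3; lia.
split.
- move=> j; rewrite SDE card3 //.
  + by rewrite eq_sym; exact: (nzX 0%N j).
  + by rewrite eq_sym; exact: (nzX 2%N j).
  + rewrite -subr_eq0 opprD addrA subrr sub0r oppr_eq0; exact: (nzX 1%N j).
- move=> z nz.
  have rz := fd_range Hm nz.
  have cov : fd n z \in elems D.
    have sz : size (elems D) = (3 * n)%N by rewrite /elems !size_cat !size_map sD; lia.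
    have sub : {subset elems D <= iota 1 (3 * n)}.
      by move=> e /(allP rng); rewrite mem_iota; lia.
    have sz2 : (size (iota 1 (3 * n)) <= size (elems D))%N by rewrite size_iota sz.
    have [_ E] := uniq_min_size uD sub sz2.
    by rewrite E mem_iota; lia.
  have [i] : exists2 i, (i < 3 * n)%N & nth 0%N (elems D) i = fd n z.
    case/(nthP 0%N): cov => i; rewrite /elems !size_cat !size_map sD => hi <-.
    by exists i => //; lia.
  move=> hi ei.
  have [s [j [s3 jn ij]]] : exists s j, [/\ (s < 3)%N, (j < n)%N & i = s * n + j]%N.
    case: (ltnP i n) => h1; first by exists 0%N, i; split => //; lia.
    case: (ltnP i (2 * n)) => h2; first by exists 1%N, (i - n)%N; split => //; lia.
    by exists 2%N, (i - 2 * n)%N; split => //; lia.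
  have E : fd n z = fd n (Xs m D s (Ordinal jn)) by rewrite fX // /ev -ij.
  exists (Ordinal jn); rewrite SDE.
  case: (fd_inj Hm E) => ->.
  + case: s s3 {E ij} => [|[|[|]]] // _ /=.
    * by exists 0, (Pj m D j); rewrite !inE !eqxx !orbT subr0.
    * by exists (Pj m D j), (Pj m D j + Qj m D j); rewrite !inE !eqxx !orbT; split => //; ring.
    * by exists 0, (Pj m D j + Qj m D j); rewrite !inE !eqxx !orbT subr0.
  + case: s s3 {E ij} => [|[|[|]]] // _ /=.
    * by exists (Pj m D j), 0; rewrite !inE !eqxx !orbT sub0r.
    * by exists (Pj m D j + Qj m D j), (Pj m D j); rewrite !inE !eqxx !orbT; split => //; ring.
    * by exists (Pj m D j + Qj m D j), 0; rewrite !inE !eqxx !orbT sub0r.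
- move=> j j' a b a' b' aS bS a'S b'S ab E.
  have ab' : a' != b'.
    by apply: contra ab => /eqP e; move: E; rewrite e subrr => /eqP; rewrite subr_eq0 eq_sym.
  have [s [sg [s3 Ed Ea]]] := pairs aS bS ab.
  have [s' [sg' [s'3 Ed' Ea']]] := pairs a'S b'S ab'.
  have F : ev n D s j = ev n D s' j'.
    rewrite -fX // -(fX s' j') //.
    have -> : fd n (Xs m D s j) = fd n (b - a) by rewrite Ed; case: sg {Ed Ea} => //; rewrite fd_opp.
    have -> : fd n (Xs m D s' j') = fd n (b' - a') by rewrite Ed'; case: sg' {Ed' Ea'} => //; rewrite fd_opp.
    by rewrite E.
  have [es ej] := ev_inj sD uD s3 s'3 (ltn_ord j) (ltn_ord j') F.
  have ejj : j = j' by apply/val_inj.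
  subst s' j'; split => //; rewrite Ea Ea'; congr Aa.
  move: E; rewrite Ed Ed'.
  case: sg {Ed Ea}; case: sg' {Ed' Ea'} => // e.
  + have := twice0 Hm e => /eqP; by rewrite (negbTE (nzX _ _ s3)).
  + have := twice0 Hm (esym e) => /eqP; by rewrite (negbTE (nzX _ _ s3)).
Qed.

Local Close Scope ring_scope.

Definition row (f g h : nat -> nat) (L : nat) : seq trip :=
  [seq (f r, g r, h r) | r <- iota 1 L].

Lemma map_tp_row f g h L : map tp (row f g h L) = map f (iota 1 L).
Proof. by rewrite /row -map_comp. Qed.
Lemma map_tq_row f g h L : map tq (row f g h L) = map g (iota 1 L).
Proof. by rewrite /row -map_comp. Qed.
Lemma map_tc_row f g h L : map tc (row f g h L) = map h (iota 1 L).
Proof. by rewrite /row -map_comp. Qed.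

Lemma uniq_map_iota (f : nat -> nat) L :
  (forall r r', 0 < r <= L -> 0 < r' <= L -> f r = f r' -> r = r') ->
  uniq (map f (iota 1 L)).
Proof.
move=> H; rewrite map_inj_in_uniq ?iota_uniq // => r r'.
by rewrite !mem_iota => h1 h2; apply: H; lia.
Qed.

Lemma disj_map_iota (f g : nat -> nat) L1 L2 :
  (forall r r', 0 < r <= L1 -> 0 < r' <= L2 -> f r <> g r') ->
  ~~ has (mem (map f (iota 1 L1))) (map g (iota 1 L2)).
Proof.
move=> H; apply/hasP => -[y /mapP [r' hr' ->] /mapP [r hr e]].
rewrite mem_iota in hr; rewrite mem_iota in hr'; apply: (H r r'); [lia | lia | by rewrite e].
Qed.

Lemma all_row (P : trip -> bool) f g h L :
  (forall r, 0 < r <= L -> P (f r, g r, h r)) -> all P (row f g h L).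
Proof.
move=> H; rewrite all_map; apply/allP => r; rewrite mem_iota => hr /=.
apply: H; lia.
Qed.

Lemma all_map_iota (P : nat -> bool) (f : nat -> nat) L :
  (forall r, 0 < r <= L -> P (f r)) -> all P (map f (iota 1 L)).
Proof.
move=> H; rewrite all_map; apply/allP => r; rewrite mem_iota => hr /=.
apply: H; lia.
Qed.

Ltac un := apply: uniq_map_iota => r r' h1 h2 /=; lia.
Ltac dis := apply: disj_map_iota => r r' h1 h2 /=; lia.
Ltac hasdis := repeat (rewrite has_cat negb_or; apply/andP; split); dis.
Ltac solve_uniq := repeat (rewrite cat_uniq; apply/and3P; split; [un | hasdis | ]); un.

Ltac splitand := repeat match goal with |- is_true (_ && _) => apply/andP; split end.

Ltac solve_hok :=
  apply/and4P; split;
  [ rewrite !size_cat !size_map !size_iota; apply/eqP; lia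
  | rewrite !all_cat; splitand;
    apply: all_row => r hr; rewrite /tp /tq /tc /=;
    apply/orP; first [left; apply/eqP; lia | right; apply/eqP; lia]
  | rewrite /elems !map_cat !map_tp_row !map_tq_row !map_tc_row -!catA !all_cat;
    splitand; apply: all_map_iota => r hr /=; first [apply/andP; split; lia | lia]
  | rewrite /elems !map_cat !map_tp_row !map_tq_row !map_tc_row -!catA; solve_uniq ].

Definition D0 (s : nat) : seq trip :=
  row (fun _ => (1)) (fun _ => (7*s + 3)) (fun _ => (7*s + 4)) 1 ++
  row (fun r => (2*s + 5 - 2*r)) (fun r => (4*s + r - 3)) (fun r => (6*s + 2 - r)) (1) ++
  row (fun r => (6*s + 4 - 2*r)) (fun r => (4*s + r - 1)) (fun r => (10*s + 3 - r)) (1) ++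
  row (fun r => (4*s + 3 - 2*r)) (fun r => (4*s + r + 1)) (fun r => (8*s + 4 - r)) (1*s - 1) ++
  row (fun r => (2*s + 3 - 2*r)) (fun r => (5*s + r)) (fun r => (7*s + 3 - r)) (1*s) ++
  row (fun r => (4*s - 2*r - 2)) (fun r => (8*s + r + 3)) (fun r => (12*s + 1 - r)) (1*s) ++
  row (fun r => (2*s - 2*r - 2)) (fun r => (9*s + r + 3)) (fun r => (11*s + 1 - r)) (1*s - 2).


Lemma hok_D0 s : 2 <= s -> hok (4 * s) (D0 s).
Proof. move=> hs; rewrite /D0; solve_hok. Qed.

Definition D1 (s : nat) : seq trip :=
  row (fun _ => (2*s + 3)) (fun _ => (10*s + 1)) (fun _ => (12*s + 3)) 1 ++
  row (fun _ => (4*s + 2)) (fun _ => (9*s + 1)) (fun _ => (11*s + 4)) 1 ++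
  row (fun r => (5 - 2*r)) (fun r => (4*s + r - 1)) (fun r => (4*s + 4 - r)) (1) ++
  row (fun r => (6*s + 5 - 2*r)) (fun r => (4*s + r)) (fun r => (10*s + 5 - r)) (1) ++
  row (fun r => (4*s - 2*r)) (fun r => (4*s + r + 3)) (fun r => (8*s + 3 - r)) (2*s - 1) ++
  row (fun r => (4*s + 1 - 2*r)) (fun r => (8*s + r + 2)) (fun r => (12*s + 3 - r)) (1*s - 2) ++
  row (fun r => (2*s + 3 - 2*r)) (fun r => (9*s + r + 1)) (fun r => (11*s + 4 - r)) (1*s - 1) ++
  row (fun r => (3 - 2*r)) (fun r => (10*s + r + 1)) (fun r => (10*s + 4 - r)) (1).

Definition D2 (s : nat) : seq trip :=
  row (fun _ => (2)) (fun _ => (4*s - 2)) (fun _ => (4*s)) 1 ++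
  row (fun _ => (4*s + 4)) (fun _ => (8*s + 3)) (fun _ => (12*s + 6)) 1 ++
  row (fun r => (6*s + 5 - 2*r)) (fun r => (4*s + r + 1)) (fun r => (10*s + 6 - r)) (2) ++
  row (fun r => (4*s - 2*r - 2)) (fun r => (4*s + r + 4)) (fun r => (8*s + 2 - r)) (1*s - 2) ++
  row (fun r => (2*s - 2*r)) (fun r => (5*s + r + 2)) (fun r => (7*s + 2 - r)) (1*s - 2) ++
  row (fun r => (2*s + 2 - 2*r)) (fun r => (6*s + r + 1)) (fun r => (8*s + 3 - r)) (1) ++
  row (fun r => (3 - 2*r)) (fun r => (7*s + r + 1)) (fun r => (7*s + 4 - r)) (1) ++
  row (fun r => (4*s + 3 - 2*r)) (fun r => (8*s + r + 3)) (fun r => (12*s + 6 - r)) (1*s) ++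
  row (fun r => (2*s + 3 - 2*r)) (fun r => (9*s + r + 3)) (fun r => (11*s + 6 - r)) (1*s).

Definition D3 (s : nat) : seq trip :=
  row (fun _ => (2)) (fun _ => (12*s - 4)) (fun _ => (12*s - 3)) 1 ++
  row (fun r => (4*s - 2*r - 3)) (fun r => (4*s + r - 1)) (fun r => (8*s - r - 4)) (1*s - 2) ++
  row (fun r => (3 - 2*r)) (fun r => (5*s + r - 3)) (fun r => (5*s - r)) (1) ++
  row (fun r => (2*s - 2*r - 1)) (fun r => (5*s + r - 1)) (fun r => (7*s - r - 2)) (1*s - 2) ++
  row (fun r => (4*s + 1 - 2*r)) (fun r => (6*s + r - 3)) (fun r => (10*s - r - 2)) (2) ++
  row (fun r => (2*s + 1 - 2*r)) (fun r => (8*s + r - 5)) (fun r => (10*s - r - 4)) (1) ++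
  row (fun r => (4*s - 2*r)) (fun r => (8*s + r - 4)) (fun r => (12*s - r - 4)) (2*s - 2).


Lemma hok_D1 s : 2 <= s -> hok (4 * s + 1) (D1 s).
Proof. move=> hs; rewrite /D1; solve_hok. Qed.

Lemma hok_D2 s : 2 <= s -> hok (4 * s + 2) (D2 s).
Proof. move=> hs; rewrite /D2; solve_hok. Qed.

Lemma hok_D3 s : 2 <= s -> hok (4 * s - 1) (D3 s).
Proof. move=> hs; rewrite /D3; solve_hok. Qed.

Definition Ds1 : seq trip := [:: (1, 2, 3)].
Definition Ds2 : seq trip := [:: (1, 3, 4); (2, 5, 6)].
Definition Ds3 : seq trip := [:: (1, 4, 5); (2, 6, 8); (3, 7, 9)].
Definition Ds4 : seq trip := [:: (1, 5, 6); (3, 7, 10); (4, 8, 12); (2, 9, 11)].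
Definition Ds5 : seq trip := [:: (1, 6, 7); (2, 8, 10); (3, 9, 12); (5, 11, 15); (4, 13, 14)].
Definition Ds6 : seq trip :=
  [:: (1, 7, 8); (2, 9, 11); (3, 10, 13); (5, 12, 17); (4, 14, 18); (6, 15, 16)].

Lemma exists_hok n : 1 <= n -> exists D, hok n D.
Proof.
move=> n1; case: (leqP n 6) => hn.
  case: n n1 hn => [|[|[|[|[|[|[|n]]]]]]] //= _ _.
  - by exists Ds1; vm_compute.
  - by exists Ds2; vm_compute.
  - by exists Ds3; vm_compute.
  - by exists Ds4; vm_compute.
  - by exists Ds5; vm_compute.
  - by exists Ds6; vm_compute.
have Hq := divn_eq n 4; move: (n %/ 4) Hq => q Hq.
have : n %% 4 < 4 by rewrite ltn_mod.
case E : (n %% 4) => [|[|[|[|]]]] // _; rewrite E in Hq.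
- exists (D0 q); have -> : n = 4 * q by lia.
  by apply: hok_D0; lia.
- exists (D1 q); have -> : n = 4 * q + 1 by lia.
  by apply: hok_D1; lia.
- exists (D2 q); have -> : n = 4 * q + 2 by lia.
  by apply: hok_D2; lia.
- exists (D3 q.+1); have -> : n = 4 * q.+1 - 1 by lia.
  by apply: hok_D3; lia.
Qed.


Lemma Int_c_of m n D k : m.+1 = (6 * n)%N -> hok n D -> (k <= n)%N -> Int_c m.+2 k.
Proof.
move=> Hm H kn; have [g1 g2 g3] := hok_G Hm H.
have [h1 h2 h3] := mir_G k g1 g2 g3.
exists (sysS (@SD m n D)), (sysS (mir (@SD m n D) k)); split.
- exact: sys_CSTS.
- exact: sys_CSTS.
- exact: common_count.
Qed.


Theorem mainTheorem2 (n : nat) : 1 <= n ->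
  forall k : nat, Int_c (6 * n + 1) k <-> k <= n.
Proof.
move=> n1 k.
have -> : (6 * n + 1 = (6 * n - 1).+2)%N by lia.
have Hm : (6 * n - 1).+1 = (6 * n)%N by lia.
split.
- by case=> B1 [B2 [H1 H2 <-]]; apply: common_le Hm H1 H2.
- move=> kn; have [D HD] := exists_hok n1; exact: Int_c_of Hm HD kn.
Qed.
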